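(* Let $R=\mathbb{Z}[a]$ and $\Gamma$ be as below. For left $\Gamma$-modules $M,N$, the $R$-module $M\otimes_R N$ carries a well-defined left $\Gamma$-module structure extending its $R$-module structure, determined by \begin{align*} Q_0(x\otimes y) &= Q_0x\otimes Q_0y + 2\,Q_1x\otimes Q_2y+2\,Q_2x\otimes Q_1y,\\ Q_1(x\otimes y) &= Q_0x\otimes Q_1y + Q_1x\otimes Q_0y + a\,Q_1x\otimes Q_2y +a\, Q_2x\otimes Q_1y +2\, Q_2x\otimes Q_2y,\\ Q_2(x\otimes y) &= Q_0x\otimes Q_2y+Q_2x\otimes Q_0y+Q_1x\otimes Q_1y + a\, Q_2x\otimes Q_2y. \end{align*} With this tensor product and unit object $R$ (with its standard $\Gamma$-module structure, given by the $R$-module structure of $R$ together with $Q_0\cdot 1=1$, $Q_1\cdot 1=0$, $Q_2\cdot 1=0$), the category of left $\Gamma$-modules is a symmetric monoidal category. Moreover, for the element $\Psi = Q_0Q_0 +a\,Q_0Q_1 -2\,Q_1Q_1 +a^2\,Q_0Q_2 -2a\,Q_1Q_2 +4\,Q_2Q_2$ one has $\Psi(x\otimes y)=\Psi x\otimes \Psi y$ for all $x\in M$, $y\in N$.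
   Context: $R=\mathbb{Z}[a]$ is a polynomial ring. $\Gamma$ is the associative ring equipped with a ring homomorphism $\eta\colon R\to\Gamma$, generated over $R$ by $Q_0,Q_1,Q_2$ subject to: (i) commutation relations: the $Q_i$ commute with elements of $\mathbb{Z}\subset R$, and $Q_0\,a = a^2Q_0-2aQ_1+6Q_2$, $Q_1\,a=3Q_0+aQ_2$, $Q_2\,a=-aQ_0+3Q_1$; (ii) adem relations: $Q_1Q_0=2Q_2Q_1-2Q_0Q_2$ and $Q_2Q_0=Q_0Q_1+aQ_0Q_2-2Q_1Q_2$. A $\Gamma$-module means a left $\Gamma$-module; it is an $R$-module via $\eta$. The standard $\Gamma$-module structure on $R$ is the unique one extending the $R$-module structure of $R$ with $Q_0\cdot1=1$, $Q_1\cdot 1=Q_2\cdot 1=0$. *)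

(* Defs.v *)
From HB Require Import structures.
From mathcomp Require Import all_boot all_order all_algebra.
Set Implicit Arguments. Unset Strict Implicit. Unset Printing Implicit Defensive.
Import GRing.Theory.
Local Open Scope ring_scope.

Definition Rg : comNzRingType := {poly int}.
Definition aR : Rg := 'X.

Definition Rlin (U V : lmodType Rg) (f : U -> V) : Prop :=
  forall (r : Rg) (u v : U), f (r *: u + v) = r *: f u + f v.

Definition Rbilin (M N P : lmodType Rg) (b : M -> N -> P) : Prop :=
  (forall x x' y, b (x + x') y = b x y + b x' y) /\
  (forall x y y', b x (y + y') = b x y + b x y') /\
  (forall (r : Rg) x y, b (r *: x) y = r *: b x y) /\
  (forall (r : Rg) x y, b x (r *: y) = r *: b x y).

Definition is_tensor (M N T : lmodType Rg) (t : M -> N -> T) : Prop :=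
  Rbilin t /\
  forall (P : lmodType Rg) (b : M -> N -> P), Rbilin b ->
    exists! f : T -> P, Rlin f /\ forall x y, f (t x y) = b x y.

(* A left Gamma-module structure on an R-module M: the action of the
   generators Q0, Q1, Q2 (additive, hence commuting with Z), subject to the
   commutation relations with a and the Adem relations.  This is exactly a
   left module over Gamma = R<Q0,Q1,Q2>/(relations) extending the R-action. *)
Record gstr (M : lmodType Rg) := GStr {
  Q0 : M -> M;
  Q1 : M -> M;
  Q2 : M -> M;
  Q0D : forall x y, Q0 (x + y) = Q0 x + Q0 y;
  Q1D : forall x y, Q1 (x + y) = Q1 x + Q1 y;
  Q2D : forall x y, Q2 (x + y) = Q2 x + Q2 y;
  Q0a : forall m, Q0 (aR *: m) = aR ^+ 2 *: Q0 m - (aR *: Q1 m) *+ 2 + Q2 m *+ 6;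
  Q1a : forall m, Q1 (aR *: m) = Q0 m *+ 3 + aR *: Q2 m;
  Q2a : forall m, Q2 (aR *: m) = - (aR *: Q0 m) + Q1 m *+ 3;
  adem1 : forall m, Q1 (Q0 m) = Q2 (Q1 m) *+ 2 - Q0 (Q2 m) *+ 2;
  adem2 : forall m, Q2 (Q0 m) = Q0 (Q1 m) + aR *: Q0 (Q2 m) - Q1 (Q2 m) *+ 2
}.

Definition gmap (M N : lmodType Rg) (sM : gstr M) (sN : gstr N) (f : M -> N) :=
  Rlin f /\
  forall m, [/\ f (Q0 sM m) = Q0 sN (f m),
                f (Q1 sM m) = Q1 sN (f m) &
                f (Q2 sM m) = Q2 sN (f m)].

Definition same_gstr (M : lmodType Rg) (s s' : gstr M) : Prop :=
  forall m, [/\ Q0 s m = Q0 s' m, Q1 s m = Q1 s' m & Q2 s m = Q2 s' m].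

Definition tensor_gstr (M N T : lmodType Rg) (sM : gstr M) (sN : gstr N)
    (sT : gstr T) (t : M -> N -> T) : Prop :=
  forall x y,
  [/\ Q0 sT (t x y) = t (Q0 sM x) (Q0 sN y) + t (Q1 sM x) (Q2 sN y) *+ 2
                      + t (Q2 sM x) (Q1 sN y) *+ 2,
      Q1 sT (t x y) = t (Q0 sM x) (Q1 sN y) + t (Q1 sM x) (Q0 sN y)
                      + aR *: t (Q1 sM x) (Q2 sN y) + aR *: t (Q2 sM x) (Q1 sN y)
                      + t (Q2 sM x) (Q2 sN y) *+ 2 &
      Q2 sT (t x y) = t (Q0 sM x) (Q2 sN y) + t (Q2 sM x) (Q0 sN y)
                      + t (Q1 sM x) (Q1 sN y) + aR *: t (Q2 sM x) (Q2 sN y)].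

Definition std_unit (sR : gstr Rg^o) : Prop :=
  [/\ Q0 sR (1 : Rg^o) = 1, Q1 sR (1 : Rg^o) = 0 & Q2 sR (1 : Rg^o) = 0].

Definition Psi (M : lmodType Rg) (s : gstr M) (m : M) : M :=
  Q0 s (Q0 s m) + aR *: Q0 s (Q1 s m) - Q1 s (Q1 s m) *+ 2
  + aR ^+ 2 *: Q0 s (Q2 s m) - (aR *: Q1 s (Q2 s m)) *+ 2
  + Q2 s (Q2 s m) *+ 4.

(* Main.v *)
Require Import Defs.
From HB Require Import structures.
From mathcomp Require Import all_boot all_order all_algebra.
From mathcomp Require Import boolp.
From mathcomp Require Import ring.
From Stdlib Require Import ProofIrrelevance.
Set Implicit Arguments. Unset Strict Implicit. Unset Printing Implicit Defensive.
Import GRing.Theory.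
Local Open Scope ring_scope.


Inductive lx := LA of nat | LZ | LP of lx & lx | LN of lx | LS of Rg & lx | LM of lx & nat.

Section Lin.
Variable V : lmodType Rg.
Fixpoint ev (env : seq V) (e : lx) : V :=
  match e with
  | LA n => nth 0 env n | LZ => 0 | LP a b => ev env a + ev env b
  | LN a => - ev env a | LS r a => r *: ev env a | LM a n => ev env a *+ n end.
Fixpoint cf (e : lx) (k : nat) : Rg :=
  match e with
  | LA n => if n == k then 1 else 0 | LZ => 0 | LP a b => cf a k + cf b k
  | LN a => - cf a k | LS r a => r * cf a k | LM a n => cf a k *+ n end.
Lemma ev_cf env e : ev env e = \sum_(k < size env) cf e k *: nth 0 env k.
Proof.
elim: e => [n||a IHa b IHb|a IHa|r a IHa|a IHa n] /=.
- case: (ltnP n (size env)) => Hn.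
    rewrite (bigD1 (Ordinal Hn)) //= eqxx scale1r big1 ?addr0 // => i Hi.
    by rewrite ifN ?scale0r // eq_sym; apply: contra Hi => /eqP Hi; apply/eqP/val_inj.
  rewrite nth_default // big1 // => i _; rewrite ifN ?scale0r //.
  by apply: contraTneq (ltn_ord i) => <-; rewrite -leqNgt.
- by rewrite big1 // => i _; rewrite scale0r.
- by rewrite IHa IHb -big_split /=; apply: eq_bigr => i _; rewrite scalerDl.
- by rewrite IHa -sumrN; apply: eq_bigr => i _; rewrite scaleNr.
- by rewrite IHa scaler_sumr; apply: eq_bigr => i _; rewrite scalerA.
- by rewrite IHa -sumrMnl; apply: eq_bigr => i _; rewrite scalerMnl.
Qed.
Lemma lin_eq env e1 e2 : (forall k, (k < size env)%N -> cf e1 k = cf e2 k) -> ev env e1 = ev env e2.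
Proof. by move=> H; rewrite !ev_cf; apply: eq_bigr => i _; rewrite H. Qed.
End Lin.

Ltac lmem x l := lazymatch l with
 | nil => constr:(false) | cons x _ => constr:(true) | cons _ ?l' => lmem x l' end.
Ltac lidx x l := lazymatch l with
 | cons x _ => constr:(0%N) | cons _ ?l' => let n := lidx x l' in constr:(n.+1) end.
Ltac lcollect e l := lazymatch e with
 | ?a + ?b => let l1 := lcollect a l in lcollect b l1
 | - ?a => lcollect a l
 | ?r *: ?a => lcollect a l
 | ?a *+ ?n => lcollect a l
 | 0 => l
 | _ => let b := lmem e l in lazymatch b with true => l | false => constr:(cons e l) end end.
Ltac lreify e l := lazymatch e with
 | ?a + ?b => let x := lreify a l in let y := lreify b l in constr:(LP x y)
 | - ?a => let x := lreify a l in constr:(LN x)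
 | ?r *: ?a => let x := lreify a l in constr:(LS r x)
 | ?a *+ ?n => let x := lreify a l in constr:(LM x n)
 | 0 => constr:(LZ)
 | _ => let n := lidx e l in constr:(LA n) end.
Ltac lsolve_k := first [ move=> ? ; by [] | case=> [_|]; [ simpl; ring | lsolve_k ] ].
Ltac lin := match goal with |- @eq ?V ?l ?r =>
  let e0 := lcollect l (@nil V) in let env := lcollect r e0 in
  let x := lreify l env in let y := lreify r env in
  change (ev env x = ev env y); apply: lin_eq; lsolve_k end.


Section AFs.
Variable V : zmodType.
Record AF := MkAF { af : Rg -> V; afD : forall x y, af (x + y) = af x + af y }.
Lemma AF_ext (f g : AF) : af f =1 af g -> f = g.
Proof.
case: f => f fD; case: g => g gD /= H.
have E : f = g by apply: funext.
subst g; congr MkAF; apply: proof_irrelevance.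
Qed.
HB.instance Definition _ := gen_eqMixin AF.
HB.instance Definition _ := gen_choiceMixin AF.
Program Definition AFz : AF := @MkAF (fun _ => 0) _.
Next Obligation. by rewrite addr0. Qed.
Program Definition AFo (f : AF) : AF := @MkAF (fun r => - af f r) _.
Next Obligation. by rewrite afD opprD. Qed.
Program Definition AFa (f g : AF) : AF := @MkAF (fun r => af f r + af g r) _.
Next Obligation. by rewrite !afD addrACA. Qed.
Lemma AFaA : associative AFa. Proof. by move=> f g h; apply: AF_ext => r /=; rewrite addrA. Qed.
Lemma AFaC : commutative AFa. Proof. by move=> f g; apply: AF_ext => r /=; rewrite addrC. Qed.
Lemma AFa0 : left_id AFz AFa. Proof. by move=> f; apply: AF_ext => r /=; rewrite add0r. Qed.
Lemma AFaN : left_inverse AFz AFo AFa. Proof. by move=> f; apply: AF_ext => r /=; rewrite addNr. Qed.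
HB.instance Definition _ := GRing.isZmodule.Build AF AFaA AFaC AFa0 AFaN.
Program Definition AFs (s : Rg) (f : AF) : AF := @MkAF (fun r => af f (r * s)) _.
Next Obligation. by rewrite mulrDl afD. Qed.
Lemma AFsA a b v : AFs a (AFs b v) = AFs (a * b) v.
Proof. by apply: AF_ext => r /=; rewrite mulrA. Qed.
Lemma AFs1 : left_id 1 AFs. Proof. by move=> f; apply: AF_ext => r /=; rewrite mulr1. Qed.
Lemma AFsDr : right_distributive AFs +%R. Proof. by move=> a f g; apply: AF_ext. Qed.
Lemma AFsDl v : {morph AFs^~ v: a b / a + b}.
Proof. by move=> a b; apply: AF_ext => r /=; rewrite mulrDr afD. Qed.
HB.instance Definition _ := GRing.Zmodule_isLmodule.Build Rg AF AFsA AFs1 AFsDr AFsDl.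
Lemma afE_add (f g : AF) r : af (f + g) r = af f r + af g r. Proof. by []. Qed.
Lemma afE_scale s (f : AF) r : af (s *: f) r = af f (r * s). Proof. by []. Qed.
Lemma afE_zero r : af (0 : AF) r = 0. Proof. by []. Qed.
End AFs.

Lemma Rlin_add (U W : lmodType Rg) (f : U -> W) : Rlin f -> forall u v, f (u + v) = f u + f v.
Proof. by move=> H u v; rewrite -{1}(scale1r u) H scale1r. Qed.
Lemma Rlin_scale (U W : lmodType Rg) (f : U -> W) : Rlin f -> forall r u, f (r *: u) = r *: f u.
Proof.
move=> H r u. have f0 : f 0 = 0.
  by apply: (addrI (f 0)); rewrite -(Rlin_add H) !addr0.
by rewrite -(addr0 (r *: u)) H f0 addr0.
Qed.

Lemma uniq_map (M N T P : lmodType Rg) (t : M -> N -> T) (b : M -> N -> P) :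
  is_tensor t -> Rbilin b -> forall f g : T -> P, Rlin f -> Rlin g ->
  (forall x y, f (t x y) = b x y) -> (forall x y, g (t x y) = b x y) -> forall z, f z = g z.
Proof.
move=> [_ U] bb f g lf lg Hf Hg z.
have [k [_ Hk]] := U P b bb.
by rewrite -(Hk f (conj lf Hf)) -(Hk g (conj lg Hg)).
Qed.

Lemma gen (M N T : lmodType Rg) (t : M -> N -> T) (V : zmodType) (D : T -> V) :
  is_tensor t -> (forall z z', D (z + z') = D z + D z') ->
  (forall x y, D (t x y) = 0) -> forall z, D z = 0.
Proof.
move=> ist DD D0 z.
have FD z0 r r' : D ((r + r') *: z0) = D (r *: z0) + D (r' *: z0) by rewrite scalerDl DD.
pose F z0 : AF V := MkAF (FD z0).
have bt := ist.1. case: bt => [_ [_ [tZ1 _]]].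
have lF : Rlin F.
  move=> r u v; apply: AF_ext => s /=.
  by rewrite scalerDr DD scalerA.
have l0 : Rlin (fun _ : T => (0 : AF V)) by move=> r u v; rewrite scaler0 addr0.
have b0 : Rbilin (fun (_ : M) (_ : N) => (0 : AF V)).
  by split; [|split; [|split]] => *; rewrite ?addr0 ?scaler0.
have := uniq_map ist b0 lF l0 _ _ z.
move=> /(_ _ _) E.
have {E} E : F z = 0.
  apply: E => // x y; apply: AF_ext => s /=.
  by rewrite -tZ1 D0.
have := congr1 (fun f => af f 1) E => /=.
by rewrite scale1r.
Qed.


Section AddF.
Variables (U W : zmodType) (f : U -> W) (fD : forall x y, f (x + y) = f x + f y).
Lemma addf0 : f 0 = 0.
Proof. by apply: (addrI (f 0)); rewrite -fD !addr0. Qed.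
Lemma addfN x : f (- x) = - f x.
Proof. by apply: (addrI (f x)); rewrite -fD !subrr addf0. Qed.
Lemma addfMn x n : f (x *+ n) = f x *+ n.
Proof. by elim: n => [|n IH]; rewrite ?addf0 // !mulrS fD IH. Qed.
Lemma addfMz x z : f (x *~ z) = f x *~ z.
Proof. case: z => n; first exact: addfMn. by rewrite NegzE !mulrNz addfN; congr (- _); exact: addfMn. Qed.
End AddF.

Section QL.
Variables (M : lmodType Rg) (s : gstr M).
Lemma Q0N x : Q0 s (- x) = - Q0 s x. Proof. by apply: addfN => ??; rewrite Q0D. Qed.
Lemma Q1N x : Q1 s (- x) = - Q1 s x. Proof. by apply: addfN => ??; rewrite Q1D. Qed.
Lemma Q2N x : Q2 s (- x) = - Q2 s x. Proof. by apply: addfN => ??; rewrite Q2D. Qed.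
Lemma Q0Mn x n : Q0 s (x *+ n) = Q0 s x *+ n. Proof. by apply: addfMn => ??; rewrite Q0D. Qed.
Lemma Q1Mn x n : Q1 s (x *+ n) = Q1 s x *+ n. Proof. by apply: addfMn => ??; rewrite Q1D. Qed.
Lemma Q2Mn x n : Q2 s (x *+ n) = Q2 s x *+ n. Proof. by apply: addfMn => ??; rewrite Q2D. Qed.
Lemma Q00 : Q0 s 0 = 0. Proof. by apply: addf0 => ??; rewrite Q0D. Qed.
Lemma Q10 : Q1 s 0 = 0. Proof. by apply: addf0 => ??; rewrite Q1D. Qed.
Lemma Q20 : Q2 s 0 = 0. Proof. by apply: addf0 => ??; rewrite Q2D. Qed.
End QL.

Section Bil.
Variables (M N T : lmodType Rg) (t : M -> N -> T) (bt : Rbilin t).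
Lemma tD1 x x' y : t (x + x') y = t x y + t x' y. Proof. by case: bt. Qed.
Lemma tD2 x y y' : t x (y + y') = t x y + t x y'. Proof. by case: bt => _ []. Qed.
Lemma tZ1 r x y : t (r *: x) y = r *: t x y. Proof. by case: bt => _ [_ []]. Qed.
Lemma tZ2 r x y : t x (r *: y) = r *: t x y. Proof. by case: bt => _ [_ [_]]. Qed.
Lemma tN1 x y : t (- x) y = - t x y. Proof. exact: (addfN (fun x => tD1 x ^~ y)). Qed.
Lemma tN2 x y : t x (- y) = - t x y. Proof. exact: (addfN (tD2 x)). Qed.
Lemma tMn1 x y n : t (x *+ n) y = t x y *+ n. Proof. exact: (addfMn (fun x => tD1 x ^~ y)). Qed.
Lemma tMn2 x y n : t x (y *+ n) = t x y *+ n. Proof. exact: (addfMn (tD2 x)). Qed.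
Lemma t01 y : t 0 y = 0. Proof. exact: (addf0 (fun x => tD1 x ^~ y)). Qed.
Lemma t02 x : t x 0 = 0. Proof. exact: (addf0 (tD2 x)). Qed.
End Bil.

Definition F0 (M N T : lmodType Rg) (sM : gstr M) (sN : gstr N) (t : M -> N -> T) x y :=
  t (Q0 sM x) (Q0 sN y) + t (Q1 sM x) (Q2 sN y) *+ 2 + t (Q2 sM x) (Q1 sN y) *+ 2.
Definition F1 (M N T : lmodType Rg) (sM : gstr M) (sN : gstr N) (t : M -> N -> T) x y :=
  t (Q0 sM x) (Q1 sN y) + t (Q1 sM x) (Q0 sN y)
                      + aR *: t (Q1 sM x) (Q2 sN y) + aR *: t (Q2 sM x) (Q1 sN y)
                      + t (Q2 sM x) (Q2 sN y) *+ 2.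
Definition F2 (M N T : lmodType Rg) (sM : gstr M) (sN : gstr N) (t : M -> N -> T) x y :=
  t (Q0 sM x) (Q2 sN y) + t (Q2 sM x) (Q0 sN y)
                      + t (Q1 sM x) (Q1 sN y) + aR *: t (Q2 sM x) (Q2 sN y).

Ltac gexp bt := rewrite ?(Q0D, Q1D, Q2D, Q0N, Q1N, Q2N, Q0Mn, Q1Mn, Q2Mn, Q00, Q10, Q20,
   Q0a, Q1a, Q2a, adem1, adem2, tD1 bt, tD2 bt, tN1 bt, tN2 bt, tZ1 bt, tZ2 bt,
   tMn1 bt, tMn2 bt, t01 bt, t02 bt).

Section Bal.
Variables (M N T : lmodType Rg) (sM : gstr M) (sN : gstr N) (t : M -> N -> T) (bt : Rbilin t).
Lemma bal0 x y : F0 sM sN t (aR *: x) y = F0 sM sN t x (aR *: y).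
Proof. rewrite /F0; gexp bt; lin. Qed.
Lemma bal1 x y : F1 sM sN t (aR *: x) y = F1 sM sN t x (aR *: y).
Proof. rewrite /F1; gexp bt; lin. Qed.
Lemma bal2 x y : F2 sM sN t (aR *: x) y = F2 sM sN t x (aR *: y).
Proof. rewrite /F2; gexp bt; lin. Qed.
Lemma com0 x y : F0 sM sN t (aR *: x) y =
  aR ^+ 2 *: F0 sM sN t x y - (aR *: F1 sM sN t x y) *+ 2 + F2 sM sN t x y *+ 6.
Proof. rewrite /F0 /F1 /F2; gexp bt; lin. Qed.
Lemma com1 x y : F1 sM sN t (aR *: x) y = F0 sM sN t x y *+ 3 + aR *: F2 sM sN t x y.
Proof. rewrite /F0 /F1 /F2; gexp bt; lin. Qed.
Lemma com2 x y : F2 sM sN t (aR *: x) y = - (aR *: F0 sM sN t x y) + F1 sM sN t x y *+ 3.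
Proof. rewrite /F0 /F1 /F2; gexp bt; lin. Qed.
End Bal.


Section Core.
Variables (M N T : lmodType Rg) (sM : gstr M) (sN : gstr N) (t : M -> N -> T) (bt : Rbilin t).
Variables (q0 q1 q2 : T -> T).
Hypotheses (q0D : forall x y, q0 (x + y) = q0 x + q0 y)
 (q1D : forall x y, q1 (x + y) = q1 x + q1 y) (q2D : forall x y, q2 (x + y) = q2 x + q2 y).
Hypotheses (q0a : forall m, q0 (aR *: m) = aR ^+ 2 *: q0 m - (aR *: q1 m) *+ 2 + q2 m *+ 6)
 (q1a : forall m, q1 (aR *: m) = q0 m *+ 3 + aR *: q2 m)
 (q2a : forall m, q2 (aR *: m) = - (aR *: q0 m) + q1 m *+ 3).
Hypotheses (h0 : forall x y, q0 (t x y) = F0 sM sN t x y)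
 (h1 : forall x y, q1 (t x y) = F1 sM sN t x y) (h2 : forall x y, q2 (t x y) = F2 sM sN t x y).
Let q0N := addfN q0D. Let q1N := addfN q1D. Let q2N := addfN q2D.
Let q0Mn := addfMn q0D. Let q1Mn := addfMn q1D. Let q2Mn := addfMn q2D.
Ltac cexp := rewrite ?(h0, h1, h2); rewrite /F0 /F1 /F2;
  rewrite ?(q0D, q1D, q2D, q0N, q1N, q2N, q0Mn, q1Mn, q2Mn, q0a, q1a, q2a, h0, h1, h2);
  rewrite /F0 /F1 /F2; gexp bt.
Lemma core_adem1 x y : q1 (q0 (t x y)) = q2 (q1 (t x y)) *+ 2 - q0 (q2 (t x y)) *+ 2.
Proof. cexp; lin. Qed.
Lemma core_adem2 x y : q2 (q0 (t x y)) = q0 (q1 (t x y)) + aR *: q0 (q2 (t x y)) - q1 (q2 (t x y)) *+ 2.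
Proof. cexp; lin. Qed.
Lemma core_psi x y : 
  q0 (q0 (t x y)) + aR *: q0 (q1 (t x y)) - q1 (q1 (t x y)) *+ 2
  + aR ^+ 2 *: q0 (q2 (t x y)) - (aR *: q1 (q2 (t x y))) *+ 2
  + q2 (q2 (t x y)) *+ 4 = t (Psi sM x) (Psi sN y).
Proof. rewrite /Psi; cexp; lin. Qed.
End Core.


Lemma polyC_scale (V : lmodType Rg) (c : int) (x : V) : (c%:P : Rg) *: x = x *~ c.
Proof. have -> : (c%:P : Rg) = c%:~R by rewrite -{1}[c]intz rmorph_int.
by rewrite scaler_int. Qed.

Section MkOp.
Variables (M N T : lmodType Rg) (t : M -> N -> T) (ist : is_tensor t) (F : M -> N -> T).
Hypotheses (FD1 : forall x x' y, F (x + x') y = F x y + F x' y)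
  (FD2 : forall x y y', F x (y + y') = F x y + F x y')
  (Fa : forall x y, F (aR *: x) y = F x (aR *: y)).
Lemma bal_all (r : Rg) x y : F (r *: x) y = F x (r *: y).
Proof.
elim/poly_ind: r x y => [|p c IH] x y.
  by rewrite !scale0r (addf0 (fun x => FD1 x ^~ y)) (addf0 (FD2 x)).
rewrite !scalerDl !polyC_scale FD1 FD2 (addfMz (fun x => FD1 x ^~ y)) (addfMz (FD2 x)).
rewrite -!scalerA IH. have -> : ('X : Rg) = aR by []. by rewrite Fa !scalerA mulrC.
Qed.
Lemma mk_op : exists Q : T -> T, (forall z z', Q (z + z') = Q z + Q z') /\ forall x y, Q (t x y) = F x y.
Proof.
have FD x y r r' : F ((r + r') *: x) y = F (r *: x) y + F (r' *: x) y by rewrite scalerDl FD1.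
pose b x y : AF T := MkAF (FD x y).
have bb : Rbilin b.
  split; [|split; [|split]] => *; apply: AF_ext => r /=.
  - by rewrite scalerDr FD1.
  - by rewrite FD2.
  - by rewrite scalerA.
  - by rewrite -bal_all !scalerA mulrC.
have [f [[lf hf] _]] := ist.2 _ b bb.
exists (fun z => af (f z) 1); split.
  by move=> z z'; rewrite (Rlin_add lf).
by move=> x y; rewrite hf /= scale1r.
Qed.
End MkOp.

Section Exist.
Variables (M N T : lmodType Rg) (sM : gstr M) (sN : gstr N) (t : M -> N -> T) (ist : is_tensor t).
Let bt := ist.1.
Lemma FiD1 (i : nat) x x' y : (if i is 0 then F0 sM sN t else if i is 1 then F1 sM sN t else F2 sM sN t) (x + x') y =
   (if i is 0 then F0 sM sN t else if i is 1 then F1 sM sN t else F2 sM sN t) x y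
 + (if i is 0 then F0 sM sN t else if i is 1 then F1 sM sN t else F2 sM sN t) x' y.
Proof. by case: i => [|[|i]]; rewrite /F0 /F1 /F2; gexp bt; lin. Qed.
Lemma FiD2 (i : nat) x y y' : (if i is 0 then F0 sM sN t else if i is 1 then F1 sM sN t else F2 sM sN t) x (y + y') =
   (if i is 0 then F0 sM sN t else if i is 1 then F1 sM sN t else F2 sM sN t) x y
 + (if i is 0 then F0 sM sN t else if i is 1 then F1 sM sN t else F2 sM sN t) x y'.
Proof. by case: i => [|[|i]]; rewrite /F0 /F1 /F2; gexp bt; lin. Qed.
Lemma Fia (i : nat) x y : (if i is 0 then F0 sM sN t else if i is 1 then F1 sM sN t else F2 sM sN t) (aR *: x) y =
   (if i is 0 then F0 sM sN t else if i is 1 then F1 sM sN t else F2 sM sN t) x (aR *: y).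
Proof. by case: i => [|[|i]] /=; [exact: bal0|exact: bal1|exact: bal2]. Qed.

Lemma exist_str : exists sT : gstr T, tensor_gstr sM sN sT t.
Proof.
have [q0 [q0D h0]] := mk_op ist (FiD1 0) (FiD2 0) (Fia 0).
have [q1 [q1D h1]] := mk_op ist (FiD1 1) (FiD2 1) (Fia 1).
have [q2 [q2D h2]] := mk_op ist (FiD1 2) (FiD2 2) (Fia 2).
simpl in h0, h1, h2.
have q0N := addfN q0D; have q1N := addfN q1D; have q2N := addfN q2D.
have q0Mn := addfMn q0D; have q1Mn := addfMn q1D; have q2Mn := addfMn q2D.
have q0a : forall m, q0 (aR *: m) = aR ^+ 2 *: q0 m - (aR *: q1 m) *+ 2 + q2 m *+ 6.
  move=> m; apply/eqP; rewrite -subr_eq0; apply/eqP; move: m; apply: (gen ist).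
    by move=> z z'; rewrite ?scalerDr !(q0D, q1D, q2D, q0N, q1N, q2N, q0Mn, q1Mn, q2Mn) ?scalerDr; lin.
  by move=> x y; rewrite -(tZ1 bt) !(h0, h1, h2) com0 // subrr.
have q1a : forall m, q1 (aR *: m) = q0 m *+ 3 + aR *: q2 m.
  move=> m; apply/eqP; rewrite -subr_eq0; apply/eqP; move: m; apply: (gen ist).
    by move=> z z'; rewrite ?scalerDr !(q0D, q1D, q2D, q0N, q1N, q2N, q0Mn, q1Mn, q2Mn) ?scalerDr; lin.
  by move=> x y; rewrite -(tZ1 bt) !(h0, h1, h2) com1 // subrr.
have q2a : forall m, q2 (aR *: m) = - (aR *: q0 m) + q1 m *+ 3.
  move=> m; apply/eqP; rewrite -subr_eq0; apply/eqP; move: m; apply: (gen ist).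
    by move=> z z'; rewrite ?scalerDr !(q0D, q1D, q2D, q0N, q1N, q2N, q0Mn, q1Mn, q2Mn) ?scalerDr; lin.
  by move=> x y; rewrite -(tZ1 bt) !(h0, h1, h2) com2 // subrr.
have ad1 : forall m, q1 (q0 m) = q2 (q1 m) *+ 2 - q0 (q2 m) *+ 2.
  move=> m; apply/eqP; rewrite -subr_eq0; apply/eqP; move: m; apply: (gen ist).
    by move=> z z'; rewrite !(q0D, q1D, q2D, q0N, q1N, q2N, q0Mn, q1Mn, q2Mn); lin.
  move=> x y; apply/eqP; rewrite subr_eq0; apply/eqP.
  by apply: (@core_adem1 M N T sM sN t bt q0 q1 q2).
have ad2 : forall m, q2 (q0 m) = q0 (q1 m) + aR *: q0 (q2 m) - q1 (q2 m) *+ 2.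
  move=> m; apply/eqP; rewrite -subr_eq0; apply/eqP; move: m; apply: (gen ist).
    by move=> z z'; rewrite ?scalerDr !(q0D, q1D, q2D, q0N, q1N, q2N, q0Mn, q1Mn, q2Mn) ?scalerDr; lin.
  move=> x y; apply/eqP; rewrite subr_eq0; apply/eqP.
  by apply: (@core_adem2 M N T sM sN t bt q0 q1 q2).
by exists (GStr q0D q1D q2D q0a q1a q2a ad1 ad2) => x y /=; split; rewrite ?(h0, h1, h2).
Qed.
End Exist.


Section RAdem.
Variables (q0 q1 q2 : Rg -> Rg).
Hypotheses (q0D : forall x y, q0 (x + y) = q0 x + q0 y)
 (q1D : forall x y, q1 (x + y) = q1 x + q1 y) (q2D : forall x y, q2 (x + y) = q2 x + q2 y).
Hypotheses (q0a : forall m, q0 (aR * m) = aR ^+ 2 * q0 m - (aR * q1 m) *+ 2 + q2 m *+ 6)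
 (q1a : forall m, q1 (aR * m) = q0 m *+ 3 + aR * q2 m)
 (q2a : forall m, q2 (aR * m) = - (aR * q0 m) + q1 m *+ 3).
Let q0N := addfN q0D. Let q1N := addfN q1D. Let q2N := addfN q2D.
Let q0Mn := addfMn q0D. Let q1Mn := addfMn q1D. Let q2Mn := addfMn q2D.
Lemma e2 m : aR ^+ 2 * m = aR * (aR * m). Proof. by rewrite mulrA expr2. Qed.
Lemma radem1 p : q1 (q0 (aR * p)) - (q2 (q1 (aR * p)) *+ 2 - q0 (q2 (aR * p)) *+ 2)
  = aR * (q1 (q0 p) - (q2 (q1 p)  *+ 2 - q0 (q2 p) *+ 2)).
Proof.
rewrite ?(q0a, q1a, q2a). rewrite ?(q0D, q1D, q2D, q0N, q1N, q2N, q0Mn, q1Mn, q2Mn, e2, q0a, q1a, q2a).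
ring.
Qed.
Lemma radem2 p : q2 (q0 (aR * p)) - (q0 (q1 (aR * p)) + aR * q0 (q2 (aR * p)) - q1 (q2 (aR * p)) *+ 2)
  = aR * (q2 (q0 p) - (q0 (q1 p) + aR * q0 (q2 p) - q1 (q2 p) *+ 2)).
Proof.
rewrite ?(q0a, q1a, q2a). rewrite ?(q0D, q1D, q2D, q0N, q1N, q2N, q0Mn, q1Mn, q2Mn, e2, q0a, q1a, q2a).
ring.
Qed.
End RAdem.


Definition cC (i j : nat) : Rg := match i, j with
  | O, O => aR ^+ 2 | O, S O => - (aR *+ 2) | O, _ => 6%:R
  | S O, O => 3%:R | S O, S O => 0 | S O, _ => aR
  | _, O => - aR | _, S O => 3%:R | _, _ => 0 end.
Definition Cm : 'M[Rg]_3 := \matrix_(i, j) cC i j.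
Lemma cfu : commr_rmorph ( *~%R (1 : 'M[Rg]_3)) Cm.
Proof. by move=> x; apply: commr_int. Qed.
Definition rho : Rg -> 'M[Rg]_3 := horner_morph cfu.
Definition QR (i : nat) (p : Rg) : Rg := rho p (inord i) 0.
Lemma QRD i x y : QR i (x + y) = QR i x + QR i y.
Proof. by rewrite /QR /rho rmorphD mxE. Qed.
Lemma QRX i p : (i < 3)%N -> QR i (aR * p) = cC i 0 * QR 0 p + cC i 1 * QR 1 p + cC i 2 * QR 2 p.
Proof.
move=> Hi; rewrite /QR /rho rmorphM /= horner_morphX -mulmxE mxE.
rewrite !big_ord_recl big_ord0 addr0 !mxE inordK // addrA.
have E : forall k : 'I_3, horner_morph cfu p k 0 = QR k p by move=> k; rewrite /QR /rho inord_val.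
by rewrite !E !inordK.
Qed.
Lemma QR1 i : (i < 3)%N -> QR i 1 = (i == 0)%N%:R.
Proof. by move=> Hi; rewrite /QR /rho rmorph1 mxE -val_eqE /= inordK. Qed.


Lemma QRa0 m : QR 0 (aR * m) = aR ^+ 2 * QR 0 m - (aR * QR 1 m) *+ 2 + QR 2 m *+ 6.
Proof. rewrite QRX //=; ring. Qed.
Lemma QRa1 m : QR 1 (aR * m) = QR 0 m *+ 3 + aR * QR 2 m.
Proof. rewrite QRX //=; ring. Qed.
Lemma QRa2 m : QR 2 (aR * m) = - (aR * QR 0 m) + QR 1 m *+ 3.
Proof. rewrite QRX //=; ring. Qed.
Lemma QR0 i : QR i 0 = 0. Proof. exact: addf0 (@QRD i). Qed.

Lemma polyC_int (c : int) : (c%:P : Rg) = 1 *~ c.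
Proof. by rewrite -{1}[c]intz rmorph_int. Qed.

Lemma Rzero (A : Rg -> Rg) : (forall x y, A (x + y) = A x + A y) -> A 1 = 0 ->
  (forall p, A (aR * p) = aR * A p) -> forall p, A p = 0.
Proof.
move=> AD A1 AX; elim/poly_ind => [|p c IH]; first exact: addf0.
rewrite AD polyC_int (addfMz AD) A1 mul0rz addr0 mulrC.
have -> : ('X : Rg) = aR by []. by rewrite AX IH mulr0.
Qed.

Lemma scRo (r x : Rg) : r *: (x : Rg^o) = r * x. Proof. by []. Qed.
Definition QRo (i : nat) : Rg^o -> Rg^o := QR i.
Lemma exist_R : exists sR : gstr Rg^o, std_unit sR.
Proof.
have D0 : forall x y : Rg^o, QRo 0 (x + y) = QRo 0 x + QRo 0 y by move=> *; exact: QRD.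
have D1 : forall x y : Rg^o, QRo 1 (x + y) = QRo 1 x + QRo 1 y by move=> *; exact: QRD.
have D2 : forall x y : Rg^o, QRo 2 (x + y) = QRo 2 x + QRo 2 y by move=> *; exact: QRD.
have a0 : forall m : Rg^o, QRo 0 (aR *: m) = aR ^+ 2 *: QRo 0 m - (aR *: QRo 1 m) *+ 2 + QRo 2 m *+ 6.
  exact: QRa0.
have a1 : forall m : Rg^o, QRo 1 (aR *: m) = QRo 0 m *+ 3 + aR *: QRo 2 m by exact: QRa1.
have a2 : forall m : Rg^o, QRo 2 (aR *: m) = - (aR *: QRo 0 m) + QRo 1 m *+ 3 by exact: QRa2.
have ad1 : forall m : Rg^o, QRo 1 (QRo 0 m) = QRo 2 (QRo 1 m) *+ 2 - QRo 0 (QRo 2 m) *+ 2.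
  move=> m; apply/eqP; rewrite -subr_eq0; apply/eqP; move: m; apply: Rzero.
  - by move=> x y; rewrite /QRo ?scRo !QRD; ring.
  - by rewrite /QRo ?scRo !QR1 //= ?QR0 ?QR1 //= ?QR0; ring.
  - move=> p; exact: radem1 (@QRD 0) (@QRD 1) (@QRD 2) QRa0 QRa1 QRa2 p.
have ad2 : forall m : Rg^o, QRo 2 (QRo 0 m) = QRo 0 (QRo 1 m) + aR *: QRo 0 (QRo 2 m) - QRo 1 (QRo 2 m) *+ 2.
  move=> m; apply/eqP; rewrite -subr_eq0; apply/eqP; move: m; apply: Rzero.
  - by move=> x y; rewrite /QRo ?scRo !QRD /=; ring.
  - by rewrite /QRo ?scRo !QR1 //= ?QR0 ?QR1 //= ?QR0; ring.
  - move=> p; rewrite /QRo ?scRo; exact: radem2 (@QRD 0) (@QRD 1) (@QRD 2) QRa0 QRa1 QRa2 p.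
exists (GStr D0 D1 D2 a0 a1 a2 ad1 ad2); split => /=; exact: QR1.
Qed.


Lemma gen_eq (M N T : lmodType Rg) (t : M -> N -> T) (V : zmodType) (f g : T -> V) :
  is_tensor t -> (forall z z', f (z + z') = f z + f z') -> (forall z z', g (z + z') = g z + g z') ->
  (forall x y, f (t x y) = g (t x y)) -> forall z, f z = g z.
Proof.
move=> ist fD gD fg z; apply/eqP; rewrite -subr_eq0; apply/eqP; move: z.
apply: (gen ist) => [z z'|x y]; last by rewrite fg subrr.
by rewrite fD gD opprD addrACA.
Qed.

Lemma tens_eqs (M N T : lmodType Rg) (sM : gstr M) (sN : gstr N) (sT : gstr T) (t : M -> N -> T) :
  tensor_gstr sM sN sT t ->
  [/\ forall x y, Q0 sT (t x y) = F0 sM sN t x y, forall x y, Q1 sT (t x y) = F1 sM sN t x y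
    & forall x y, Q2 sT (t x y) = F2 sM sN t x y].
Proof. by move=> H; split=> x y; case: (H x y). Qed.

Lemma gmap_eqs (M N : lmodType Rg) (sM : gstr M) (sN : gstr N) (f : M -> N) : gmap sM sN f ->
  [/\ forall m, f (Q0 sM m) = Q0 sN (f m), forall m, f (Q1 sM m) = Q1 sN (f m)
    & forall m, f (Q2 sM m) = Q2 sN (f m)].
Proof. by move=> [_ H]; split=> m; case: (H m). Qed.

Lemma RlinN (U W : lmodType Rg) (f : U -> W) (lf : Rlin f) x : f (- x) = - f x.
Proof. exact: (addfN (Rlin_add lf)). Qed.
Lemma RlinMn (U W : lmodType Rg) (f : U -> W) (lf : Rlin f) x n : f (x *+ n) = f x *+ n.
Proof. exact: (addfMn (Rlin_add lf)). Qed.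
Lemma Rlin0 (U W : lmodType Rg) (f : U -> W) (lf : Rlin f) : f 0 = 0.
Proof. exact: (addf0 (Rlin_add lf)). Qed.

Ltac lexp lf := rewrite ?(Rlin_add lf, Rlin_scale lf, RlinN lf, RlinMn lf, Rlin0 lf).
Ltac qadd := rewrite ?(Q0D, Q1D, Q2D).

Lemma part3 (M M' N N' T T' : lmodType Rg) (sM : gstr M) (sM' : gstr M')
     (sN : gstr N) (sN' : gstr N') (sT : gstr T) (sT' : gstr T')
     (t : M -> N -> T) (t' : M' -> N' -> T') (f : M -> M') (g : N -> N')
     (h : T -> T') :
     is_tensor t -> is_tensor t' ->
     tensor_gstr sM sN sT t -> tensor_gstr sM' sN' sT' t' ->
     gmap sM sM' f -> gmap sN sN' g ->
     Rlin h -> (forall x y, h (t x y) = t' (f x) (g y)) ->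
     gmap sT sT' h.
Proof.
move=> ist ist' HT HT' fm gm lh ht.
have bt := ist.1; have bt' := ist'.1.
case: (tens_eqs HT) => a0 a1 a2; case: (tens_eqs HT') => b0 b1 b2.
case: (gmap_eqs fm) => f0 f1 f2; case: (gmap_eqs gm) => g0 g1 g2.
split => // m; split; move: m; apply: (gen_eq ist) => *; lexp lh; qadd; lexp lh => //.
- by rewrite a0 ht b0 /F0; lexp lh; rewrite !ht !(f0, f1, f2, g0, g1, g2).
- by rewrite a1 ht b1 /F1; lexp lh; rewrite !ht !(f0, f1, f2, g0, g1, g2).
- by rewrite a2 ht b2 /F2; lexp lh; rewrite !ht !(f0, f1, f2, g0, g1, g2).
Qed.


Lemma part7 (M N T T' : lmodType Rg) (sM : gstr M) (sN : gstr N)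
     (sT : gstr T) (sT' : gstr T') (t : M -> N -> T) (t' : N -> M -> T')
     (h : T -> T') :
     is_tensor t -> is_tensor t' ->
     tensor_gstr sM sN sT t -> tensor_gstr sN sM sT' t' ->
     Rlin h -> (forall x y, h (t x y) = t' y x) ->
     gmap sT sT' h /\ bijective h.
Proof.
move=> ist ist' HT HT' lh ht.
have bt := ist.1; have bt' := ist'.1.
case: (tens_eqs HT) => a0 a1 a2; case: (tens_eqs HT') => b0 b1 b2.
split.
  split => // m; split; move: m; apply: (gen_eq ist) => *; lexp lh; qadd; lexp lh => //.
  - by rewrite a0 ht b0 /F0; lexp lh; rewrite !ht; lin.
  - by rewrite a1 ht b1 /F1; lexp lh; rewrite !ht; lin.
  - by rewrite a2 ht b2 /F2; lexp lh; rewrite !ht; lin.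
have bb : Rbilin (fun y x => t x y).
  by split; [|split; [|split]] => *; rewrite ?(tD1 bt, tD2 bt, tZ1 bt, tZ2 bt).
have [k [[lk hk] _]] := ist'.2 _ _ bb.
exists k.
  apply: (gen_eq ist) => [z z'|z z'|x y] /=; first by lexp lh; lexp lk.
    by []. by rewrite ht hk.
apply: (gen_eq ist') => [z z'|z z'|x y] /=; first by lexp lk; lexp lh.
  by []. by rewrite hk ht.
Qed.

Lemma part5 (M T : lmodType Rg) (sR : gstr Rg^o) (sM : gstr M) (sT : gstr T)
     (t : Rg^o -> M -> T) (h : T -> M) :
     std_unit sR -> is_tensor t -> tensor_gstr sR sM sT t ->
     Rlin h -> (forall (r : Rg^o) x, h (t r x) = r *: x) ->
     gmap sT sM h /\ bijective h.
Proof.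
move=> [u0 u1 u2] ist HT lh ht.
have bt := ist.1.
case: (tens_eqs HT) => a0 a1 a2.
have tr r x : t r x = t 1 (r *: x).
  by rewrite (tZ2 bt) -(tZ1 bt) /GRing.scale /= mulr1.
split.
  split => // m; split; move: m; apply: (gen_eq ist) => [||r x]; rewrite ?(tr r x);
      try (by move=> *; lexp lh; qadd; lexp lh); move: (r *: x) => {r} x;
      rewrite ?(a0, a1, a2) ht scale1r /F0 /F1 /F2 ?(u0, u1, u2) ?(t01 bt);
      lexp lh; rewrite ?ht; rewrite ?scale1r; lin.
exists (t 1); first by apply: (gen_eq ist) => [z z'|z z'|r x] //=; [lexp lh; rewrite (tD2 bt) | rewrite ht -tr].
by move=> m; rewrite ht scale1r.
Qed.

Lemma part6 (M T : lmodType Rg) (sR : gstr Rg^o) (sM : gstr M) (sT : gstr T)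
     (t : M -> Rg^o -> T) (h : T -> M) :
     std_unit sR -> is_tensor t -> tensor_gstr sM sR sT t ->
     Rlin h -> (forall x (r : Rg^o), h (t x r) = r *: x) ->
     gmap sT sM h /\ bijective h.
Proof.
move=> [u0 u1 u2] ist HT lh ht.
have bt := ist.1.
case: (tens_eqs HT) => a0 a1 a2.
have tr x r : t x r = t (r *: x) 1.
  by rewrite (tZ1 bt) -(tZ2 bt) /GRing.scale /= mulr1.
split.
  split => // m; split; move: m; apply: (gen_eq ist) => [||x r]; rewrite ?(tr x r);
      try (by move=> *; lexp lh; qadd; lexp lh); move: (r *: x) => {r} x;
      rewrite ?(a0, a1, a2) ht scale1r /F0 /F1 /F2 ?(u0, u1, u2) ?(t02 bt);
      lexp lh; rewrite ?ht; rewrite ?scale1r; lin.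
exists (t^~ 1); first by apply: (gen_eq ist) => [z z'|z z'|x r] //=; [lexp lh; rewrite (tD1 bt) | rewrite ht -tr].
by move=> m; rewrite ht scale1r.
Qed.


Lemma part4 (M N P T1 T2 T3 T4 : lmodType Rg) (sM : gstr M) (sN : gstr N)
     (sP : gstr P) (sT1 : gstr T1) (sT2 : gstr T2) (sT3 : gstr T3)
     (sT4 : gstr T4) (t1 : M -> N -> T1) (t2 : T1 -> P -> T2)
     (t3 : N -> P -> T3) (t4 : M -> T3 -> T4) (h : T2 -> T4) :
     is_tensor t1 -> is_tensor t2 -> is_tensor t3 -> is_tensor t4 ->
     tensor_gstr sM sN sT1 t1 -> tensor_gstr sT1 sP sT2 t2 ->
     tensor_gstr sN sP sT3 t3 -> tensor_gstr sM sT3 sT4 t4 ->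
     Rlin h -> (forall x y z, h (t2 (t1 x y) z) = t4 x (t3 y z)) ->
     gmap sT2 sT4 h /\ bijective h.
Proof.
move=> i1 i2 i3 i4 H1 H2 H3 H4 lh ht.
have b1 := i1.1; have b2 := i2.1; have b3 := i3.1; have b4 := i4.1.
case: (tens_eqs H1) => c0 c1 c2; case: (tens_eqs H2) => d0 d1 d2.
case: (tens_eqs H3) => e0 e1 e2; case: (tens_eqs H4) => f0 f1 f2.
have red : forall (V : zmodType) (f g : T2 -> V), (forall z z', f (z + z') = f z + f z') ->
   (forall z z', g (z + z') = g z + g z') ->
   (forall x y z, f (t2 (t1 x y) z) = g (t2 (t1 x y) z)) -> forall w, f w = g w.
  move=> V f g fD gD fg; apply: (gen_eq i2) => // u z; move: u.
  by apply: (gen_eq i1 (f := fun u => f (t2 u z)) (g := fun u => g (t2 u z))) => *; rewrite ?(tD1 b2) ?fD ?gD.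
split.
  split => // m; split; move: m; apply: red => [||x y z]; try (by move=> *; lexp lh; qadd; lexp lh);
  rewrite ?(d0, d1, d2) ht ?(f0, f1, f2) /F0 /F1 /F2 ?(c0, c1, c2, e0, e1, e2) /F0 /F1 /F2;
  gexp b1; gexp b2; gexp b3; gexp b4; lexp lh; rewrite ?ht; lin.
have bx : forall x, Rbilin (fun y z => t2 (t1 x y) z).
  move=> x; split; [|split; [|split]] => *;
  by rewrite ?(tD2 b1, tD1 b2, tD2 b2, tZ2 b1, tZ1 b2, tZ2 b2).
have [G HG] : {G : M -> T3 -> T2 & forall x, Rlin (G x) /\ forall y z, G x (t3 y z) = t2 (t1 x y) z}.
  by apply: (@choice M (T3 -> T2) (fun x g => Rlin g /\ forall y z, g (t3 y z) = t2 (t1 x y) z)) => x; have [g [Hg _]] := i3.2 _ _ (bx x); exists g.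
have lG x := (HG x).1. have hG x := (HG x).2.
have bG : Rbilin G.
  split; [|split; [|split]].
  - move=> x x'; apply: (gen_eq i3) => [z z'|z z'|y z]; first by lexp (lG (x + x')).
      by lexp (lG x); lexp (lG x'); rewrite addrACA.
    by lexp (lG x); lexp (lG x'); rewrite !hG (tD1 b1) (tD1 b2).
  - by move=> x w w'; lexp (lG x).
  - move=> r x; apply: (gen_eq i3) => [z z'|z z'|y z]; first by lexp (lG (r *: x)).
      by lexp (lG x); rewrite scalerDr.
    by lexp (lG x); rewrite !hG (tZ1 b1) (tZ1 b2).
  - by move=> r x w; lexp (lG x).
have [k [[lk hk] _]] := i4.2 _ _ bG.
exists k.
  by apply: red => [z z'|z z'|x y z] /=; [lexp lh; lexp lk| |rewrite ht hk hG].
apply: (gen_eq i4) => [z z'|z z'|x w] /=; first by lexp lk; lexp lh.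
  by [].
rewrite hk; move: w; apply: (gen_eq i3) => [z z'|z z'|y z] /=; first by lexp (lG x); lexp lh.
  by rewrite (tD2 b4).
by rewrite hG ht.
Qed.


Lemma part8 (M N T : lmodType Rg) (sM : gstr M) (sN : gstr N) (sT : gstr T)
     (t : M -> N -> T) :
     is_tensor t -> tensor_gstr sM sN sT t ->
     forall x y, Psi sT (t x y) = t (Psi sM x) (Psi sN y).
Proof.
move=> ist HT x y; case: (tens_eqs HT) => a0 a1 a2.
rewrite /Psi -/(Psi sM x) -/(Psi sN y).
apply: (@core_psi M N T sM sN t ist.1 (Q0 sT) (Q1 sT) (Q2 sT)) => //;
 first [exact: Q0D | exact: Q1D | exact: Q2D | exact: Q0a | exact: Q1a | exact: Q2a].
Qed.

Lemma part1 (M N T : lmodType Rg) (sM : gstr M) (sN : gstr N) (t : M -> N -> T) :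
     is_tensor t ->
     exists sT : gstr T, tensor_gstr sM sN sT t /\
       forall sT' : gstr T, tensor_gstr sM sN sT' t -> same_gstr sT' sT.
Proof.
move=> ist; have [sT HT] := exist_str sM sN ist.
exists sT; split => // sT' HT' m.
case: (tens_eqs HT) => a0 a1 a2; case: (tens_eqs HT') => b0 b1 b2.
split; move: m; apply: (gen_eq ist) => *; rewrite ?(Q0D, Q1D, Q2D) //.
- by rewrite a0 b0. - by rewrite a1 b1. - by rewrite a2 b2.
Qed.

Theorem mainTheorem3 :
  (* (1) the tensor product carries a unique Gamma-structure given by the formulas *)
  (forall (M N T : lmodType Rg) (sM : gstr M) (sN : gstr N) (t : M -> N -> T),
     is_tensor t ->
     exists sT : gstr T, tensor_gstr sM sN sT t /\
       forall sT' : gstr T, tensor_gstr sM sN sT' t -> same_gstr sT' sT)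
  /\
  (* (2) the unit object: the standard Gamma-structure on R exists *)
  (exists sR : gstr Rg^o, std_unit sR)
  /\
  (* (3) functoriality: f (x) g is a Gamma-map for Gamma-maps f, g *)
  (forall (M M' N N' T T' : lmodType Rg) (sM : gstr M) (sM' : gstr M')
     (sN : gstr N) (sN' : gstr N') (sT : gstr T) (sT' : gstr T')
     (t : M -> N -> T) (t' : M' -> N' -> T') (f : M -> M') (g : N -> N')
     (h : T -> T'),
     is_tensor t -> is_tensor t' ->
     tensor_gstr sM sN sT t -> tensor_gstr sM' sN' sT' t' ->
     gmap sM sM' f -> gmap sN sN' g ->
     Rlin h -> (forall x y, h (t x y) = t' (f x) (g y)) ->
     gmap sT sT' h)
  /\
  (* (4) associator (M (x) N) (x) P -> M (x) (N (x) P) is a Gamma-isomorphism *)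
  (forall (M N P T1 T2 T3 T4 : lmodType Rg) (sM : gstr M) (sN : gstr N)
     (sP : gstr P) (sT1 : gstr T1) (sT2 : gstr T2) (sT3 : gstr T3)
     (sT4 : gstr T4) (t1 : M -> N -> T1) (t2 : T1 -> P -> T2)
     (t3 : N -> P -> T3) (t4 : M -> T3 -> T4) (h : T2 -> T4),
     is_tensor t1 -> is_tensor t2 -> is_tensor t3 -> is_tensor t4 ->
     tensor_gstr sM sN sT1 t1 -> tensor_gstr sT1 sP sT2 t2 ->
     tensor_gstr sN sP sT3 t3 -> tensor_gstr sM sT3 sT4 t4 ->
     Rlin h -> (forall x y z, h (t2 (t1 x y) z) = t4 x (t3 y z)) ->
     gmap sT2 sT4 h /\ bijective h)
  /\
  (* (5) left unitor R (x) M -> M is a Gamma-isomorphism *)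
  (forall (M T : lmodType Rg) (sR : gstr Rg^o) (sM : gstr M) (sT : gstr T)
     (t : Rg^o -> M -> T) (h : T -> M),
     std_unit sR -> is_tensor t -> tensor_gstr sR sM sT t ->
     Rlin h -> (forall (r : Rg^o) x, h (t r x) = r *: x) ->
     gmap sT sM h /\ bijective h)
  /\
  (* (6) right unitor M (x) R -> M is a Gamma-isomorphism *)
  (forall (M T : lmodType Rg) (sR : gstr Rg^o) (sM : gstr M) (sT : gstr T)
     (t : M -> Rg^o -> T) (h : T -> M),
     std_unit sR -> is_tensor t -> tensor_gstr sM sR sT t ->
     Rlin h -> (forall x (r : Rg^o), h (t x r) = r *: x) ->
     gmap sT sM h /\ bijective h)
  /\
  (* (7) symmetry M (x) N -> N (x) M is a Gamma-isomorphism *)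
  (forall (M N T T' : lmodType Rg) (sM : gstr M) (sN : gstr N)
     (sT : gstr T) (sT' : gstr T') (t : M -> N -> T) (t' : N -> M -> T')
     (h : T -> T'),
     is_tensor t -> is_tensor t' ->
     tensor_gstr sM sN sT t -> tensor_gstr sN sM sT' t' ->
     Rlin h -> (forall x y, h (t x y) = t' y x) ->
     gmap sT sT' h /\ bijective h)
  /\
  (* (8) Psi is multiplicative *)
  (forall (M N T : lmodType Rg) (sM : gstr M) (sN : gstr N) (sT : gstr T)
     (t : M -> N -> T),
     is_tensor t -> tensor_gstr sM sN sT t ->
     forall x y, Psi sT (t x y) = t (Psi sM x) (Psi sN y)).
Proof.
split; first exact: part1.
split; first exact: exist_R.
split; first exact: part3.
split; first exact: part4.
split; first exact: part5.
split; first exact: part6.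
split; first exact: part7.
exact: part8.
Qed.
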